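(* Let $k,l$ be positive integers, let $G$ be a $k$-degenerate graph and $H$ an $l$-degenerate graph. Then $G+_R H$ is $(k+l)$-degenerate.
   Context: A graph is $k$-degenerate if its vertices can be successively deleted so that each deleted vertex has degree at most $k$ at the time of deletion. The triangle parallel graph $R(G)$ has vertex set $V(G)\cup E(G)$: it consists of $G$ together with, for each edge $e=xy$ of $G$, a new vertex $e$ adjacent to $x$ and $y$. The $R$-sum $G+_R H$ has vertex set $(V(G)\cup E(G))\times V(H)$, and $(u_1,u_2)\sim(v_1,v_2)$ iff [$u_1=v_1\in V(G)$ and $u_2v_2\in E(H)$] or [$u_2=v_2$ and $u_1v_1\in E(R(G))$]. *)

(* Defs.v *)
From mathcomp Require Import all_boot.
Set Implicit Arguments. Unset Strict Implicit. Unset Printing Implicit Defensive.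

Definition simple_graph (T : finType) (e : rel T) : Prop :=
  symmetric e /\ irreflexive e.

Fixpoint deletion_ok (T : finType) (e : rel T) (k : nat) (s : seq T) : bool :=
  if s is x :: s' then (count (e x) s' <= k) && deletion_ok e k s' else true.

(* k-degenerate: there is an ordering of all vertices (each exactly once)
   along which successive deletion always removes a vertex of degree <= k. *)
Definition degenerate (T : finType) (e : rel T) (k : nat) : Prop :=
  exists s : seq T, [/\ uniq s, (forall x : T, x \in s) & deletion_ok e k s].

Definition is_edge (T : finType) (e : rel T) (A : {set T}) : bool :=
  [exists x, exists y, (A == [set x; y]) && e x y].
Definition edge_type (T : finType) (e : rel T) := {A : {set T} | is_edge e A}.

Definition R_adj (T : finType) (e : rel T) : rel (T + edge_type e) :=
  fun u v => match u, v with
  | inl x, inl y => e x y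
  | inl x, inr f => x \in val f
  | inr f, inl y => y \in val f
  | inr _, inr _ => false
  end.

Definition Rsum_adj (T : finType) (e : rel T) (U : finType) (h : rel U)
  : rel ((T + edge_type e) * U) :=
  fun p q =>
    (match p.1, q.1 with inl x, inl y => x == y | _, _ => false end && h p.2 q.2)
    || ((p.2 == q.2) && @R_adj T e p.1 q.1).

Arguments R_adj : clear implicits.
Arguments Rsum_adj : clear implicits.
Arguments degenerate : clear implicits.
Arguments simple_graph : clear implicits.

(* Main.v *)
Require Import Defs.
From mathcomp Require Import all_boot.
From mathcomp Require Import zify.
Set Implicit Arguments. Unset Strict Implicit.

Lemma count_card (T : finType) (a : pred T) (s : seq T) :
  uniq s -> (forall x, x \in s) -> count a s = #|a|.
Proof.
move=> us alls; rewrite -size_filter.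
have /card_uniqP <- : uniq (filter a s) by rewrite filter_uniq.
by apply: eq_card => x; rewrite mem_filter alls andbT.
Qed.

Lemma rank_degenerate (T : finType) (e : rel T) k (r : T -> nat) :
  injective r -> (forall x, #|[pred y | e x y && (r x < r y)]| <= k) ->
  degenerate T e k.
Proof.
move=> ri hb.
pose le := (fun a b : T => r a <= r b).
have tot : total le by move=> a b; exact: leq_total.
have tr : transitive le by move=> b a c; exact: leq_trans.
exists (sort le (enum T)); split.
- by rewrite sort_uniq enum_uniq.
- by move=> x; rewrite mem_sort mem_enum.
have := sort_sorted tot (enum T).
have : uniq (sort le (enum T)) by rewrite sort_uniq enum_uniq.
elim: (sort le (enum T)) => [|x s IH] //= /andP[xs us] srt.
rewrite IH ?(path_sorted srt) // andbT.
have allge := order_path_min tr srt.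
apply: leq_trans (hb x).
rewrite -size_filter cardE; apply: uniq_leq_size; first by rewrite filter_uniq.
move=> y; rewrite mem_filter mem_enum /= => /andP[exy ys]; rewrite inE exy /=.
have := allP allge y ys; rewrite /le leq_eqVlt => /orP[/eqP E|//].
by move: xs; rewrite (ri _ _ E) ys.
Qed.

Lemma deg_count (T : finType) (e : rel T) k s : uniq s -> deletion_ok e k s ->
  forall x, x \in s -> count (fun y => e x y && (index x s < index y s)) s <= k.
Proof.
elim: s => [|z s IH] //= /andP[zs us] /andP[cz ds] x.
have neq : forall y, y \in s -> (z == y) = false.
  by move=> y ys; apply/negbTE; apply: contraNneq zs => ->.
have [->|xz] /= := eqVneq x z; rewrite eqxx /= andbF add0n.
  move=> _; apply: leq_trans cz; rewrite -!size_filter.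
  suff -> : [seq y <- s | e z y && (0 < (if z == y then 0 else (index y s).+1))] = [seq y <- s | e z y] by [].
  by apply: eq_in_filter => y ys; rewrite neq // andbT.
rewrite in_cons (negbTE xz) /= => xs; apply: leq_trans (IH us ds x xs).
rewrite -!size_filter.
suff -> : [seq y <- s | e x y && ((index x s).+1 < (if z == y then 0 else (index y s).+1))] = [seq y <- s | e x y && (index x s < index y s)] by [].
by apply: eq_in_filter => y ys; rewrite neq.
Qed.

Lemma deg_card (T : finType) (e : rel T) k s : uniq s -> (forall x, x \in s) ->
  deletion_ok e k s -> forall x, #|[pred y | e x y && (index x s < index y s)]| <= k.
Proof.
move=> us alls ds x; rewrite -(@count_card _ [pred y | e x y && (index x s < index y s)] s us alls).
exact: deg_count.
Qed.

Lemma lexeq n a b c d : b < n -> d < n -> a*n+b = c*n+d -> a = c /\ b = d.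
Proof. move=> h1 h2 E; have ac : a = c by nia. by subst; split; lia. Qed.

Theorem theorem2 (k l : nat) (V W : finType) (g : rel V) (h : rel W) :
  0 < k -> 0 < l ->
  simple_graph V g -> simple_graph W h ->
  degenerate V g k -> degenerate W h l ->
  degenerate _ (Rsum_adj V g W h) (k + l).
Proof.
move=> k0 l0 _ _ [sG [uG aG dG]] [sH [uH aH dH]].
set n := size sH.
set N0 := #|{: edge_type g}| * n.
have iH : forall w, index w sH < n by move=> w; rewrite index_mem.
have iE : forall f : edge_type g, enum_rank f < #|{: edge_type g}| by move=> f; exact: ltn_ord.
pose r := fun p : (V + edge_type g) * W => match p with
  | (inr f, w) => enum_rank f * n + index w sH
  | (inl x, w) => N0 + index x sG * n + index w sH end.
have rlt : forall (f : edge_type g) (w : W), enum_rank f * n + index w sH < N0.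
  move=> f w; have := iH w; have := iE f; rewrite /N0; nia.
apply: (@rank_degenerate _ _ _ r).
  move=> [[x|f] w] [[y|f'] w'] /=.
  - move=> E; have := iH w; have := iH w'; move: E.
    move=> E h1 h2.
    have e1 : index x sG = index y sG by nia.
    have e2 : index w sH = index w' sH by nia.
    by rewrite (index_inj x (aG x) (aG y) e1) (index_inj w (aH w) (aH w') e2).
  - by move=> E; have := rlt f' w'; rewrite -E; lia.
  - by move=> E; have := rlt f w; rewrite E; lia.
  - move=> E; have := iH w; have := iH w'; move: E => E h2 h3.
    have [e1 e2] := @lexeq n _ _ _ _ h3 h2 E.
    by rewrite (enum_rank_inj (val_inj e1)) (index_inj w (aH w) (aH w') e2).
move=> [[x|f] w].
- set PH := [set w' | h w w' && (index w sH < index w' sH)].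
  set PG := [set y | g x y && (index x sG < index y sG)].
  apply: (@leq_trans (#|[set (inl x, w') | w' in PH]| + #|[set (inl y, w) | y in PG]|)).
    apply: leq_trans (leq_card_setU _ _) => //.
    apply: subset_leq_card; apply/subsetP => -[[y|f'] w']; rewrite inE /= => /andP[adj lt].
      move: adj; rewrite /Rsum_adj /= => /orP[/andP[/eqP xy hw]|/andP[/eqP ww gxy]].
        subst y; apply/setUP; left; apply/imsetP; exists w' => //.
        by rewrite inE hw /=; move: lt; lia.
      subst w'; apply/setUP; right; apply/imsetP; exists y => //.
      rewrite inE gxy /=; move: lt => /= lt; rewrite ltnNge; apply/negP => le; have := leq_mul le (leqnn n); lia.
    by move: lt => /= lt; have := ltn_trans lt (rlt f' w'); rewrite -addnA ltnNge leq_addr.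
  rewrite addnC; apply: leq_add.
    apply: leq_trans (leq_imset_card _ _) _.
    by apply: leq_trans _ (deg_card uG aG dG x); apply: subset_leq_card; apply/subsetP => y; rewrite !inE.
  apply: leq_trans (leq_imset_card _ _) _.
  by apply: leq_trans _ (deg_card uH aH dH w); apply: subset_leq_card; apply/subsetP => y; rewrite !inE.
- apply: (@leq_trans 2); last by move: k0 l0; lia.
  apply: (@leq_trans #|[set (inl y, w) | y in val f]|).
    apply: subset_leq_card; apply/subsetP => -[[y|f'] w']; rewrite inE /= => /andP[adj lt].
      move: adj; rewrite /Rsum_adj /= => /andP[/eqP ww yf].
      by subst w'; apply/imsetP; exists y.
    by move: adj; rewrite /Rsum_adj /= andbF.
  apply: leq_trans (leq_imset_card _ _) _.
  case: f => A /= /existsP[a /existsP[b /andP[/eqP -> _]]].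
  by rewrite cards2; case: (a != b).
Qed.
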